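(* Consider a regular spherically symmetric, asymptotically flat initial data set for the Einstein–Maxwell equations (with no magnetic charge). Assume there is a ball $\mathcal{B}=\{l\le l_0\}$ of finite area radius $\mathcal{R}=r(l_0)>0$ such that outside $\mathcal{B}$ (i.e. for $l\ge l_0$) the data are electrovacuum, and such that the dominant energy condition $\mu\ge |j|$ holds in $\mathcal{B}$. Let $Q$ be the total charge of $\mathcal{B}$ and assume $Q\neq 0$. Then: (i) If the exterior region $\{l\ge l_0\}$ is untrapped, then $2\mathcal{R}>|Q|$. (ii) If there is a horizon outside $\mathcal{B}$, then its area radius $\mathcal{R}_0$ satisfies $\mathcal{R}_0\ge |Q|$; equality holds for the horizon of the extreme Reissner–Nordström black hole ($M=|Q|$).
   Context: Regular spherically symmetric initial data: the manifold is $\mathbb{R}^3$ with metric $h=dl^2+r(l)^2(d\theta^2+\sin^2\theta\,d\phi^2)$, where $l\ge0$ is the geodesic distance to the center and $r(l)$ (the area radius) is smooth on $[0,\infty)$ with $r(0)=0$, $r'(0)=1$. The second fundamental form is $K_{ij}=n_in_jK_l+(h_{ij}-n_in_j)K_r$ with $n=\partial_l$ and functions $K_l(l),K_r(l)$. The constraint equations are $K_r(K_r+2K_l)-\frac{1}{r^2}(r'^2+2rr''-1)=8\pi\mu$, $\;K_r'+\frac{r'}{r}(K_r-K_l)=4\pi j$, where $\mu$ is the energy density and $j$ the radial momentum density. The dominant energy condition is $\mu\ge|j|$. The electric and magnetic fields are radial, $E=E^in_i$, $B=B^in_i$, satisfying $\frac{1}{r^2}(Er^2)'=4\pi\rho$,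 $\frac1{r^2}(Br^2)'=0$ with $\rho$ the charge density; no magnetic charges means $B=0$. Also $\mu=\mu_M+\frac1{8\pi}(E^2+B^2)$ with $\mu_M$ the non-electromagnetic energy density. Electrovacuum means $\mu_M=0$, $j=0$, $\rho=0$. The charge of $\mathcal{B}$ is $Q=4\pi\int_0^{l_0}\rho r^2\,dl=E(l_0)r(l_0)^2$. Asymptotic flatness: in Cartesian coordinates $h_{ij}=\delta_{ij}+\gamma_{ij}$ with $\gamma_{ij}=O(r^{-1})$, $\partial\gamma=O(r^{-2})$, $\partial^2\gamma=O(r^{-3})$, $K_{ij}=O(r^{-2})$, $\partial K=O(r^{-3})$; in particular $r(l)\to\infty$, $r'\to1$, $rK_r\to0$ as $l\to\infty$. Null expansions of the sphere at $l$: $\theta^\pm=\frac2r(r'\pm K_r r)$. A region between two concentric spheres is untrapped if $\theta^+\theta^->0$ there and trapped if $\theta^+\theta^-<0$. A horizon is the outer boundary of a trapped region; it satisfies $\theta^+\theta^-=0$, and $\mathcal{R}_0$ denotes its area radius. The mass $M$ of the data is the ADM mass, equal to $\lim_{l\to\infty}\mathcal{E}$ where $\mathcal{E}=\frac r2\bigl(1-\frac{r^2}{4}\theta^+\theta^-\bigr)$ is the Misner–Sharp energy. *)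

(* Defs.v *)
From Stdlib Require Import Reals Lra.
Open Scope R_scope.

Definition smooth (f : R -> R) : Prop :=
  exists D : nat -> R -> R,
    D 0%nat = f /\ forall (n : nat) (x : R), derivable_pt_lim (D n) x (D (S n) x).

Definition tends_to_at_infty (f : R -> R) (a : R) : Prop :=
  forall eps : R, 0 < eps -> exists L : R, forall l : R, L <= l -> Rabs (f l - a) < eps.

Definition tends_to_infty (f : R -> R) : Prop :=
  forall M : R, exists L : R, forall l : R, L <= l -> M <= f l.

Definition theta_plus (r r1 Kr : R -> R) (l : R) : R := 2 / r l * (r1 l + Kr l * r l).
Definition theta_minus (r r1 Kr : R -> R) (l : R) : R := 2 / r l * (r1 l - Kr l * r l).
Definition theta_prod (r r1 Kr : R -> R) (l : R) : R :=
  theta_plus r r1 Kr l * theta_minus r r1 Kr l.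

(* The sphere at l1 is a horizon: outer boundary of a trapped region
   (a, l1) between two concentric spheres, with theta+ theta- = 0 at l1. *)
Definition is_horizon (r r1 Kr : R -> R) (l1 : R) : Prop :=
  theta_prod r r1 Kr l1 = 0 /\
  exists a : R, 0 <= a /\ a < l1 /\
    forall l : R, a < l < l1 -> theta_prod r r1 Kr l < 0.

(* Main.v *)
Require Import Defs.
From Stdlib Require Import Reals Lra.
From Coquelicot Require Import Coquelicot.
Open Scope R_scope.

Lemma DR f f' x : (forall y, derivable_pt_lim f y (f' y)) -> Derive (fun y => f y) x = f' x.
Proof. intro H. apply is_derive_unique. apply is_derive_Reals. apply H. Qed.

Lemma exD f f' x : (forall y, derivable_pt_lim f y (f' y)) -> ex_derive (fun y => f y) x.
Proof. intro H. exists (f' x). apply is_derive_Reals, H. Qed.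

Lemma side_neg f x d : derivable_pt_lim f x d -> d < 0 ->
  exists del, 0 < del /\ forall h, 0 < h < del -> f (x+h) < f x /\ f x < f (x - h).
Proof.
  intros H Hd. destruct (H (-d/2)) as [del Hdel]; [lra|].
  exists del; split; [apply cond_pos|].
  intros h [h0 h1].
  assert (A := Hdel h ltac:(lra) ltac:(rewrite Rabs_right; lra)).
  assert (B := Hdel (-h) ltac:(lra) ltac:(rewrite Rabs_left; lra)).
  apply Rabs_def2 in A; apply Rabs_def2 in B. destruct A as [A1 A2], B as [B1 B2].
  replace (x + - h) with (x - h) in * by field.
  set (q := (f (x + h) - f x) / h) in *.
  set (q2 := (f (x - h) - f x) / - h) in *.
  assert (E1 : f (x+h) - f x = q * h) by (unfold q; field; lra).
  assert (E2 : f (x-h) - f x = q2 * (- h)) by (unfold q2; field; lra).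
  split; nra.
Qed.

Lemma side_pos f x d : derivable_pt_lim f x d -> 0 < d ->
  exists del, 0 < del /\ forall h, 0 < h < del -> f x < f (x+h) /\ f (x - h) < f x.
Proof.
  intros H Hd. assert (H' := derivable_pt_lim_opp f x d H).
  destruct (side_neg _ _ _ H') as [del [Hdel Hh]]; [lra|].
  exists del; split; auto. intros h hh. destruct (Hh h hh) as [A B].
  unfold opp_fct in A, B. lra.
Qed.

Lemma cont_deriv f f' : (forall y, derivable_pt_lim f y (f' y)) -> continuity f.
Proof. intro H. apply derivable_continuous. intro y. exists (f' y). apply H. Qed.

Lemma cont_eps f f' : (forall y, derivable_pt_lim f y (f' y)) -> forall x eps, 0 < eps ->
  exists alp, 0 < alp /\ forall y, Rabs (y - x) < alp -> Rabs (f y - f x) < eps.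
Proof.
  intros H x eps He. assert (C := cont_deriv f f' H x).
  unfold continuity_pt, continue_in, limit1_in, limit_in in C. simpl in C.
  destruct (C eps He) as [alp [Ha Hy]]. exists alp; split; [lra|].
  intros y Hy1. destruct (Req_dec y x) as [->|Hne].
  - unfold Rminus; rewrite Rplus_opp_r, Rabs_R0; lra.
  - apply Hy. split; [split; auto; exact I| exact Hy1].
Qed.

Lemma dec_aux mu j a b : Rabs j <= mu -> b^2 < a^2 -> 0 < a -> 0 <= mu * a + j * b.
Proof.
  intros H1 H2 H3.
  assert (Hb : Rabs b < a).
  { apply Rabs_def1; nra. }
  assert (Hm : 0 <= mu) by (pose proof (Rabs_pos j); lra).
  assert (Rabs (j * b) <= mu * a).
  { rewrite Rabs_mult. apply Rmult_le_compat; auto using Rabs_pos; lra. }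
  assert (- (j*b) <= Rabs (j*b)) by (rewrite <- Rabs_Ropp; apply RRle_abs).
  lra.
Qed.

Theorem theorem1
  (r r1 r2 Kl Kr Kr1 E E1 mu muM j rho : R -> R) (l0 : R)
  (Hr_smooth : smooth r) (HKl_smooth : smooth Kl) (HKr_smooth : smooth Kr)
  (HE_smooth : smooth E)
  (Hr1 : forall l, derivable_pt_lim r l (r1 l))
  (Hr2 : forall l, derivable_pt_lim r1 l (r2 l))
  (HKr1 : forall l, derivable_pt_lim Kr l (Kr1 l))
  (HE1 : forall l, derivable_pt_lim E l (E1 l))
  (Hr0 : r 0 = 0) (Hr10 : r1 0 = 1) (Hrpos : forall l, 0 < l -> 0 < r l)
  (Hham : forall l, 0 < l ->
     Kr l * (Kr l + 2 * Kl l) - (r1 l ^ 2 + 2 * r l * r2 l - 1) / r l ^ 2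
       = 8 * PI * mu l)
  (Hmom : forall l, 0 < l -> Kr1 l + r1 l / r l * (Kr l - Kl l) = 4 * PI * j l)
  (Hmax : forall l, 0 < l ->
     (E1 l * r l ^ 2 + 2 * E l * r l * r1 l) / r l ^ 2 = 4 * PI * rho l)
  (Hmu : forall l, 0 < l -> mu l = muM l + E l ^ 2 / (8 * PI))
  (Hl0 : 0 < l0)
  (Hvac : forall l, l0 <= l -> muM l = 0 /\ j l = 0 /\ rho l = 0)
  (Hdec : forall l, 0 < l <= l0 -> Rabs (j l) <= mu l)
  (Haf_r : tends_to_infty r)
  (Haf_r1 : tends_to_at_infty r1 1)
  (Haf_K : tends_to_at_infty (fun l => r l * Kr l) 0)
  (HQ : E l0 * r l0 ^ 2 <> 0) :
  ((forall l, l0 <= l -> 0 < theta_prod r r1 Kr l) ->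
     Rabs (E l0 * r l0 ^ 2) < 2 * r l0)
  /\
  (forall l1, l0 <= l1 -> is_horizon r r1 Kr l1 ->
     Rabs (E l0 * r l0 ^ 2) <= r l1).
Proof.
  pose (P := fun l => r1 l ^ 2 - (r l * Kr l) ^ 2).
  pose (dP := fun l => 2 * r1 l * r2 l - 2 * (r l * Kr l) * (r1 l * Kr l + r l * Kr1 l)).
  pose (En := fun l => r l * (1 - P l) / 2).
  pose (dEn := fun l => r1 l * (1 - P l) / 2 - r l * dP l / 2).
  assert (HPI : 0 < PI) by apply PI_RGT_0.
  assert (HdP : forall x, derivable_pt_lim P x (dP x)).
  { intro x; apply is_derive_Reals; unfold P, dP; auto_derive.
    - repeat split; eapply exD; eauto.
    - rewrite (DR _ _ x Hr1), (DR _ _ x Hr2), (DR _ _ x HKr1); field. }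
  assert (HdEn : forall x, derivable_pt_lim En x (dEn x)).
  { intro x; apply is_derive_Reals; unfold En, dEn, P, dP; auto_derive.
    - repeat split; eapply exD; eauto.
    - rewrite (DR _ _ x Hr1), (DR _ _ x Hr2), (DR _ _ x HKr1); field. }
  assert (Hth : forall l, 0 < l -> theta_prod r r1 Kr l = 4 / r l ^ 2 * P l).
  { intros l hl. pose proof (Hrpos l hl). unfold theta_prod, theta_plus, theta_minus, P.
    field. lra. }
  assert (HthP : forall l, 0 < l -> (0 < theta_prod r r1 Kr l <-> 0 < P l)
                 /\ (theta_prod r r1 Kr l < 0 <-> P l < 0)
                 /\ (theta_prod r r1 Kr l = 0 <-> P l = 0)).
  { intros l hl. rewrite (Hth l hl). pose proof (Hrpos l hl).
    assert (0 < 4 / r l ^ 2) by (apply Rdiv_lt_0_compat; [lra| apply pow_lt; lra]).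
    repeat split; intro; nra. }
  assert (HdEn_id : forall l, 0 < l ->
            dEn l = 4 * PI * r l ^ 2 * (mu l * r1 l + j l * Kr l * r l)).
  { intros l hl. pose proof (Hrpos l hl).
    replace (4 * PI * r l ^ 2 * (mu l * r1 l + j l * Kr l * r l)) with
      (r l ^ 2 * r1 l / 2 * (8 * PI * mu l) + r l ^ 3 * Kr l * (4 * PI * j l)) by field.
    rewrite <- (Hham l hl), <- (Hmom l hl). unfold dEn, dP, P. field. lra. }
  assert (HdP_id : forall l, 0 < l ->
            dP l = (1 - P l) * r1 l / r l - 8 * PI * r l * (mu l * r1 l + j l * r l * Kr l)).
  { intros l hl. pose proof (Hrpos l hl).
    replace (8 * PI * r l * (mu l * r1 l + j l * r l * Kr l)) with
      (r l * r1 l * (8 * PI * mu l) + 2 * r l ^ 2 * Kr l * (4 * PI * j l)) by field.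
    rewrite <- (Hham l hl), <- (Hmom l hl). unfold dP, P. field. lra. }
  assert (Hmn : forall l, l0 <= l -> mu l = E l ^ 2 / (8 * PI)).
  { intros l hl. rewrite (Hmu l ltac:(lra)). rewrite (proj1 (Hvac l hl)). field. lra. }
  assert (Hj0 : forall l, l0 <= l -> j l = 0).
  { intros l hl. apply (Hvac l hl). }
  set (Q := E l0 * r l0 ^ 2).
  assert (HQc : forall l, l0 <= l -> E l * r l ^ 2 = Q).
  { intros l hl. destruct (Rle_lt_or_eq_dec _ _ hl) as [hlt|heq]; [|subst l; reflexivity].
    assert (Hd : forall c, derivable_pt_lim (fun x => E x * r x ^ 2) c
                   (E1 c * r c ^ 2 + E c * (2 * r c * r1 c))).
    { intro c; apply is_derive_Reals; auto_derive.
      - repeat split; eapply exD; eauto.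
      - rewrite (DR _ _ c Hr1), (DR _ _ c HE1); field. }
    destruct (MVT_cor2 _ _ l0 l hlt (fun c _ => Hd c)) as [c [Hc1 Hc2]].
    assert (Hx : E1 c * r c ^ 2 + 2 * E c * r c * r1 c
               = ((E1 c * r c ^ 2 + 2 * E c * r c * r1 c) / r c ^ 2) * r c ^ 2).
    { pose proof (Hrpos c ltac:(lra)). field. lra. }
    rewrite (Hmax c ltac:(lra)) in Hx. rewrite (proj2 (proj2 (Hvac c ltac:(lra)))) in Hx.
    unfold Q. 
    assert (E l * r l ^ 2 - E l0 * r l0 ^ 2 = 0).
    { rewrite Hc1. replace (E1 c * r c ^ 2 + E c * (2 * r c * r1 c))
        with (E1 c * r c ^ 2 + 2 * E c * r c * r1 c) by field. rewrite Hx. field. }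
    lra. }
  set (C := En l0 + Q ^ 2 / (2 * r l0)).
  assert (HC : forall l, l0 <= l -> r l ^ 2 * P l = r l ^ 2 - 2 * C * r l + Q ^ 2).
  { intros l hl.
    assert (Hg : En l + Q ^ 2 / (2 * r l) = C).
    { destruct (Rle_lt_or_eq_dec _ _ hl) as [hlt|heq]; [|subst l; reflexivity].
      assert (Hd : forall c, l0 <= c <= l -> derivable_pt_lim (fun x => En x + Q ^ 2 / (2 * r x)) c
                     (dEn c - Q ^ 2 * r1 c / (2 * r c ^ 2))).
      { intros c hc. pose proof (Hrpos c ltac:(lra)).
        apply is_derive_Reals; auto_derive.
        - repeat split; try (eapply exD; eauto). lra.
        - rewrite (DR _ _ c Hr1), (DR _ _ c HdEn). field. lra. }
      destruct (MVT_cor2 _ _ l0 l hlt Hd) as [c [Hc1 Hc2]].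
      assert (Hz : dEn c - Q ^ 2 * r1 c / (2 * r c ^ 2) = 0).
      { pose proof (Hrpos c ltac:(lra)).
        rewrite (HdEn_id c ltac:(lra)), (Hmn c ltac:(lra)), (Hj0 c ltac:(lra)).
        rewrite <- (HQc c ltac:(lra)). field. lra. }
      rewrite Hz in Hc1. unfold C. lra. }
    pose proof (Hrpos l ltac:(lra)).
    rewrite <- Hg. unfold En. field. lra. }
  assert (HR : 0 < r l0) by auto.
  split.
  -
    intro Hunt.
    assert (HP0 : forall l, l0 <= l -> 0 < P l).
    { intros l hl. apply (HthP l ltac:(lra)). apply Hunt; auto. }
    assert (Hcr1 : continuity r1) by exact (cont_deriv _ _ Hr2).
    assert (Hcr : continuity r) by exact (cont_deriv _ _ Hr1).
    assert (Hr1l0 : 0 < r1 l0).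
    { destruct (Rtotal_order (r1 l0) 0) as [Hneg|[Hz|Hpos]]; auto.
      - exfalso. destruct (Haf_r1 (1/2) ltac:(lra)) as [L HL].
        set (L' := Rmax L l0).
        assert (HL' : Rabs (r1 L' - 1) < 1/2) by (apply HL; apply Rmax_l).
        apply Rabs_def2 in HL'.
        destruct (IVT_cor r1 l0 L' Hcr1 (Rmax_r L l0) ltac:(nra)) as [z [Hz1 Hz2]].
        pose proof (HP0 z ltac:(lra)). unfold P in H. rewrite Hz2 in H. nra.
      - exfalso. pose proof (HP0 l0 ltac:(lra)). unfold P in H. rewrite Hz in H. nra. }
    assert (HEn0 : 0 <= En l0).
    { destruct (Rle_or_lt 0 (En l0)) as [ok|Hneg]; auto. exfalso.
      set (S := fun x => 0 <= x <= l0 /\ 0 <= En x).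
      assert (Hb1 : bound S) by (exists l0; intros x [hx _]; lra).
      assert (Hb2 : exists x, S x).
      { exists 0. split; [lra|]. unfold En. rewrite Hr0. lra. }
      destruct (completeness S Hb1 Hb2) as [b [Hub Hlub]].
      assert (Hb0 : 0 <= b).
      { apply Hub. split; [lra|]. unfold En. rewrite Hr0. lra. }
      assert (Hbl : b <= l0) by (apply Hlub; intros x [hx _]; lra).
      assert (Hafter : forall y, b < y <= l0 -> En y < 0).
      { intros y hy. destruct (Rle_or_lt 0 (En y)) as [h|h]; auto.
        assert (y <= b) by (apply Hub; split; lra). lra. }
      assert (HEnb : 0 <= En b).
      { destruct (Rle_or_lt 0 (En b)) as [h|h]; auto. exfalso.
        destruct (cont_eps _ _ HdEn b (- En b) ltac:(lra)) as [alp [Ha Hy]].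
        assert (b <= b - alp/2); [|lra].
        apply Hlub. intros x [hx1 hx2].
        destruct (Rle_or_lt x (b - alp/2)) as [h1|h1]; auto. exfalso.
        assert (x <= b) by (apply Hub; split; auto).
        assert (Rabs (x - b) < alp) by (apply Rabs_def1; lra).
        pose proof (Hy x H0). apply Rabs_def2 in H1. lra. }
      assert (Hbl' : b < l0).
      { destruct (Rle_lt_or_eq_dec _ _ Hbl) as [h|h]; auto. subst b. lra. }
      assert (HPy : forall y, b < y <= l0 -> 1 < P y).
      { intros y hy. pose proof (Hafter y hy). pose proof (Hrpos y ltac:(lra)).
        unfold En in H. nra. }
      assert (Hr1y : forall y, b < y <= l0 -> 0 < r1 y).
      { intros y hy. destruct (Rtotal_order (r1 y) 0) as [Hneg'|[Hz|Hpos]]; auto.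
        - exfalso. destruct (IVT_cor r1 y l0 Hcr1 ltac:(lra) ltac:(nra)) as [z [Hz1 Hz2]].
          pose proof (HPy z ltac:(lra)). unfold P in H. rewrite Hz2 in H. nra.
        - exfalso. pose proof (HPy y hy). unfold P in H. rewrite Hz in H. nra. }
      destruct (MVT_cor2 En dEn b l0 Hbl' (fun c _ => HdEn c)) as [c [Hc1 Hc2]].
      assert (0 <= dEn c).
      { rewrite (HdEn_id c ltac:(lra)).
        pose proof (Hrpos c ltac:(lra)).
        assert (0 <= mu c * r1 c + j c * (Kr c * r c)).
        { apply dec_aux.
          - apply Hdec; lra.
          - pose proof (HPy c ltac:(lra)). unfold P in H0. nra.
          - apply Hr1y; lra. }
        assert (0 <= r c ^ 2) by nra.
        assert (0 <= 4 * PI * r c ^ 2) by nra.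
        replace (mu c * r1 c + j c * Kr c * r c) with (mu c * r1 c + j c * (Kr c * r c)) by field.
        nra. }
      nra. }
    destruct (Rlt_or_le (Rabs Q) (2 * r l0)) as [ok|Hbad]; [exact ok|exfalso].
    assert (HQ2 : Q ^ 2 = Rabs Q ^ 2) by (rewrite pow2_abs; reflexivity).
    set (t := Q ^ 2 / (2 * r l0)).
    assert (Ht : Rabs Q <= t).
    { unfold t. rewrite HQ2. apply (Rmult_le_reg_r (2 * r l0)); [lra|].
      field_simplify; [|lra]. nra. }
    destruct (Haf_r (t + 1)) as [L HL].
    set (L' := Rmax L l0).
    assert (HL' : t + 1 <= r L') by (apply HL; apply Rmax_l).
    assert (Hct : continuity (fun x => r x - t)).
    { apply continuity_minus; auto. apply continuity_const. intros a b; reflexivity. }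
    destruct (IVT_cor _ l0 L' Hct (Rmax_r L l0) ltac:(nra)) as [z [Hz1 Hz2]].
    assert (Hrz : r z = t) by lra.
    pose proof (HC z ltac:(lra)) as HCz. pose proof (HP0 z ltac:(lra)) as HPz.
    rewrite Hrz in HCz.
    assert (HCt : t <= C).
    { unfold C. fold t. pose proof HEn0. lra. }
    assert (0 < t) by (pose proof (Rabs_pos Q); lra).
    assert (t ^ 2 * P z <= 0) by nra.
    assert (Ht2 : 0 < t ^ 2) by (apply pow_lt; lra).
    pose proof (Rmult_lt_0_compat _ _ Ht2 HPz). lra.
  - intros l1 Hl1 [Hth0 [a [Ha0 [Hal1 Htr]]]].
    assert (Hx1 : 0 < r l1) by (apply Hrpos; lra).
    assert (HP1 : P l1 = 0) by (apply (HthP l1 ltac:(lra)); exact Hth0).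
    destruct (Rle_or_lt (Rabs Q) (r l1)) as [ok|Hbad]; [exact ok|exfalso].
    assert (HQ2 : Q ^ 2 = Rabs Q ^ 2) by (rewrite pow2_abs; reflexivity).
    assert (HQx : r l1 ^ 2 < Q ^ 2) by (rewrite HQ2; nra).
    assert (HEl1 : E l1 * r l1 ^ 2 = Q) by (apply HQc; lra).
    assert (HEr : 1 < E l1 ^ 2 * r l1 ^ 2).
    { assert (Q ^ 2 = (E l1 ^ 2 * r l1 ^ 2) * r l1 ^ 2) by (rewrite <- HEl1; field).
      assert (0 < r l1 ^ 2) by nra. nra. }
    assert (Hcr : continuity r) by exact (cont_deriv _ _ Hr1).
    destruct (Rle_or_lt (r1 l1) 0) as [Hle|Hpos].
    +
      assert (Hl2 : exists l2, l1 < l2 /\ r l2 < r l1).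
      { destruct (Rle_lt_or_eq_dec _ _ Hle) as [Hneg|Hz].
        - destruct (side_neg r l1 (r1 l1) (Hr1 l1) Hneg) as [del [Hdel Hh]].
          exists (l1 + del/2). split; [lra|]. apply (Hh (del/2)); lra.
        - assert (HK : Kr l1 = 0).
          { unfold P in HP1. rewrite Hz in HP1.
            assert ((r l1 * Kr l1) ^ 2 = 0) by lra.
            assert (r l1 * Kr l1 = 0) by nra; nra. }
          assert (Hr2n : r2 l1 < 0).
          { pose proof (Hham l1 ltac:(lra)) as Hh. rewrite HK, Hz in Hh.
            rewrite (Hmn l1 ltac:(lra)) in Hh.
            assert (Hh' : 2 * r l1 * r2 l1 = 1 - E l1 ^ 2 * r l1 ^ 2).
            { assert (Hx : (0 ^ 2 + 2 * r l1 * r2 l1 - 1) = - (E l1 ^ 2) * r l1 ^ 2).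
              { replace (0 ^ 2 + 2 * r l1 * r2 l1 - 1) with
                  (((0 ^ 2 + 2 * r l1 * r2 l1 - 1) / r l1 ^ 2) * r l1 ^ 2) by (field; lra).
                replace ((0 ^ 2 + 2 * r l1 * r2 l1 - 1) / r l1 ^ 2) with
                  (0 * (0 + 2 * Kl l1) - 8 * PI * (E l1 ^ 2 / (8 * PI))) by lra.
                field. lra. }
              lra. }
            nra. }
          destruct (side_neg r1 l1 (r2 l1) (Hr2 l1) Hr2n) as [del [Hdel Hh]].
          exists (l1 + del/2). split; [lra|].
          destruct (MVT_cor2 r r1 l1 (l1 + del/2) ltac:(lra) (fun c _ => Hr1 c)) as [c [Hc1 Hc2]].
          assert (r1 c < 0).
          { replace c with (l1 + (c - l1)) by field. rewrite <- Hz.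
            apply (Hh (c - l1)); lra. }
          nra. }
      destruct Hl2 as [l2 [Hl2a Hl2b]].
      destruct (Haf_r (r l1 + 1)) as [L HL].
      set (L' := Rmax L l2 + 1).
      assert (HL' : r l1 + 1 <= r L') by (apply HL; unfold L'; pose proof (Rmax_l L l2); lra).
      assert (HL2 : l2 < L') by (unfold L'; pose proof (Rmax_r L l2); lra).
      destruct (continuity_ab_min r l1 L' ltac:(lra) (fun c _ => Hcr c)) as [mx [Hmin Hmx]].
      assert (Hm1 : r mx < r l1) by (pose proof (Hmin l2 ltac:(lra)); lra).
      assert (Hmx1 : l1 < mx).
      { destruct (Rle_lt_or_eq_dec _ _ (proj1 Hmx)) as [h|h]; auto. subst mx; lra. }
      assert (Hmx2 : mx < L').
      { destruct (Rle_lt_or_eq_dec _ _ (proj2 Hmx)) as [h|h]; auto. subst mx; lra. }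
      assert (Hd0 : r1 mx = 0).
      { destruct (Rtotal_order (r1 mx) 0) as [Hn|[Hz|Hp]]; auto; exfalso.
        - destruct (side_neg r mx (r1 mx) (Hr1 mx) Hn) as [del [Hdel Hh]].
          set (h := Rmin (del/2) ((L' - mx)/2)).
          assert (0 < h) by (unfold h; apply Rmin_glb_lt; lra).
          assert (h <= del/2) by apply Rmin_l. assert (h <= (L' - mx)/2) by apply Rmin_r.
          destruct (Hh h ltac:(lra)) as [A _].
          pose proof (Hmin (mx + h) ltac:(lra)). lra.
        - destruct (side_pos r mx (r1 mx) (Hr1 mx) Hp) as [del [Hdel Hh]].
          set (h := Rmin (del/2) ((mx - l1)/2)).
          assert (0 < h) by (unfold h; apply Rmin_glb_lt; lra).
          assert (h <= del/2) by apply Rmin_l. assert (h <= (mx - l1)/2) by apply Rmin_r.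
          destruct (Hh h ltac:(lra)) as [_ A].
          pose proof (Hmin (mx - h) ltac:(lra)). lra. }
      assert (HPm : P mx <= 0) by (unfold P; rewrite Hd0; nra).
      pose proof (HC mx ltac:(lra)) as HCm. pose proof (HC l1 ltac:(lra)) as HC1.
      rewrite HP1 in HC1.
      assert (Hym : 0 < r mx) by (apply Hrpos; lra).
      assert (HCx : r l1 < C) by nra.
      assert (0 < r mx ^ 2 - 2 * C * r mx + Q ^ 2).
      { replace (r mx ^ 2 - 2 * C * r mx + Q ^ 2) with
          ((r mx - r l1) * (r mx + r l1 - 2 * C) + (r l1 ^ 2 - 2 * C * r l1 + Q ^ 2)) by field.
        nra. }
      nra.
    +
      assert (HdPn : dP l1 < 0).
      { rewrite (HdP_id l1 ltac:(lra)), HP1, (Hmn l1 ltac:(lra)), (Hj0 l1 ltac:(lra)).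
        replace ((1 - 0) * r1 l1 / r l1 - 8 * PI * r l1 * (E l1 ^ 2 / (8 * PI) * r1 l1 + 0 * r l1 * Kr l1))
          with (r1 l1 / r l1 * (1 - E l1 ^ 2 * r l1 ^ 2)) by (field; lra).
        assert (0 < r1 l1 / r l1) by (apply Rdiv_lt_0_compat; lra).
        nra. }
      destruct (side_neg P l1 (dP l1) (HdP l1) HdPn) as [del [Hdel Hh]].
      set (h := Rmin (del/2) ((l1 - a)/2)).
      assert (0 < h) by (unfold h; apply Rmin_glb_lt; lra).
      assert (h <= del/2) by apply Rmin_l. assert (h <= (l1 - a)/2) by apply Rmin_r.
      destruct (Hh h ltac:(lra)) as [_ A].
      assert (P (l1 - h) < 0).
      { apply (HthP (l1 - h) ltac:(lra)). apply Htr. lra. }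
      lra.
Qed.
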